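(* The invariant probability $\mu$ of the kernel $M$ has no atom; in particular $\mu(\{0\})=0$.
   Context: $M$ is the Markov kernel $M(x,\cdot)=\frac16\sum_{i=1}^6\delta_{z_i(x)}$ on $[0,1/2]$, where for $x\in[0,1/2]$: $z_1(x)=\frac{3x}{2+2x}$; $z_2(x)=\frac{3x}{2-x}$ if $x<2/7$ and $\frac{2-4x}{2-x}$ if $x\ge2/7$; $z_3(x)=\frac{1+x}{3-3x}$ if $x<1/5$ and $\frac{2-4x}{3-3x}$ if $x\ge1/5$; $z_4(x)=\frac{1+x}{4-2x}$; $z_5(x)=\frac{1-2x}{4-2x}$; $z_6(x)=\frac{1-2x}{3}$. $M$ has a unique invariant probability measure, denoted $\mu$. *)

(* Defs.v *)
From HB Require Import structures.
From mathcomp Require Import all_boot all_order all_algebra.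
From mathcomp Require Import all_classical all_reals all_analysis.
Set Implicit Arguments. Unset Strict Implicit. Unset Printing Implicit Defensive.
Import Order.TTheory GRing.Theory Num.Theory.
Local Open Scope ring_scope.
Local Open Scope classical_set_scope.

(* The six branches z_1, ..., z_6 of the Markov kernel M on [0,1/2],
   indexed by i : 'I_6 (i = 0 is z_1, ..., i = 5 is z_6). *)
Definition zmap (R : realType) (i : 'I_6) (x : R) : R :=
  match val i with
  | 0 => 3 * x / (2 + 2 * x)
  | 1 => if x < 2 / 7 then 3 * x / (2 - x) else (2 - 4 * x) / (2 - x)
  | 2 => if x < 1 / 5 then (1 + x) / (3 - 3 * x) else (2 - 4 * x) / (3 - 3 * x)
  | 3 => (1 + x) / (4 - 2 * x)
  | 4 => (1 - 2 * x) / (4 - 2 * x)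
  | _ => (1 - 2 * x) / 3
  end.

Definition I0 (R : realType) : set R := `[0, 2^-1]%classic.

(* A probability measure on R (Borel) is a probability on [0,1/2] when it
   gives full mass to [0,1/2]; it is M-invariant when
   mu(A) = \int M(x,A) dmu(x) = (1/6) sum_i mu({x in [0,1/2] | z_i(x) in A}). *)
Definition M_invariant (R : realType) (mu : probability R R) : Prop :=
  mu (@I0 R) = 1%E /\
  forall A : set R, measurable A ->
    mu A = (\sum_(i < 6) (6^-1)%:E * mu (@I0 R `&` (zmap i @^-1` A)))%E.

(* Main.v *)
Require Import Defs.
From HB Require Import structures.
From mathcomp Require Import all_boot all_order all_algebra.
From mathcomp Require Import all_classical all_reals all_analysis.
From mathcomp Require Import ring lra.
Import Order.TTheory GRing.Theory Num.Theory.
Local Open Scope ring_scope.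
Local Open Scope classical_set_scope.

Set Implicit Arguments. Unset Strict Implicit.
Section S.
Variables (R : realType) (mu : probability R R).

Definition aa (y : R) : R := fine (mu [set y]).

Lemma sub2_meas (p q : R) (A : set R) : A `<=` [set p] `|` [set q] -> measurable A.
Proof.
move=> HA.
have : A = (if `[< A p >] then [set p] else set0) `|` (if `[< A q >] then [set q] else set0).
  apply/seteqP; split=> y.
    move=> Ay; have [Hy|Hy] : y = p \/ y = q by exact: HA.
      by subst y; rewrite /setU /= (asboolT Ay); left.
    by subst y; rewrite /setU /= (asboolT Ay); right.
  rewrite /setU /=; by case; [case: asboolP => // ? -> | case: asboolP => // ? ->].
move=> ->; apply: measurableU; case: asboolP => _; by [apply: measurable_set1 | apply: measurable0].
Qed.

Lemma finmu (A : set R) : measurable A -> mu A = (fine (mu A))%:E.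
Proof. by move=> mA; rewrite fineK // fin_num_measure. Qed.

Lemma aa_ge0 y : 0 <= aa y.
Proof. by rewrite /aa fine_ge0 // measure_ge0. Qed.

Lemma aaE y : mu [set y] = (aa y)%:E.
Proof. by rewrite /aa -finmu //; apply: measurable_set1. Qed.

Lemma bound2 (p q : R) (A : set R) : A `<=` [set p] `|` [set q] -> fine (mu A) <= aa p + aa q.
Proof.
move=> HA; have mA := sub2_meas HA.
rewrite -lee_fin -finmu // EFinD -!aaE.
apply: le_trans (measureU2 _ (measurable_set1 p) (measurable_set1 q)).
apply: le_measure => //; rewrite inE //; apply: measurableU; exact: measurable_set1.
Qed.

Lemma bound1 (p : R) (A : set R) : A `<=` [set p] -> fine (mu A) <= aa p.
Proof.
move=> HA; have mA : measurable A.
  apply: (sub2_meas (p:=p) (q:=p)) => y /HA ->; by left.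
rewrite -lee_fin -finmu // -!aaE.
apply: le_measure => //; rewrite inE //; exact: measurable_set1.
Qed.

Lemma bound0 (A : set R) : A `<=` set0 -> fine (mu A) = 0.
Proof. move=> HA; have -> : A = set0 by apply/seteqP; split => // x /HA. by rewrite measure0. Qed.


Lemma solve (y c d : R) : d != 0 -> y * d = c -> y = c / d.
Proof. by move=> d0 <-; rewrite mulfK. Qed.

Lemma unfrac (x n d : R) : x = n / d -> d != 0 -> x * d = n.
Proof. by move=> -> d0; rewrite divfK. Qed.

Lemma pre1 (i : 'I_6) (x y : R) : val i = 0%N -> 0 <= y <= 2^-1 -> zmap i y = x ->
  y = 2 * x / (3 - 2 * x).
Proof.
move=> Hi /andP[y0 y1]; rewrite /zmap Hi => Hx.
have d0 : 2 + 2 * y != 0 by rewrite gt_eqF //; lra.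
have E := unfrac (esym Hx) d0.
apply: solve; first by rewrite gt_eqF //; nra.
nra.
Qed.


Lemma pre2 (i : 'I_6) (x y : R) : val i = 1%N -> 0 <= y <= 2^-1 -> zmap i y = x ->
  y = 2 * x / (3 + x) \/ y = (2 - 2 * x) / (4 - x).
Proof.
move=> Hi /andP[y0 y1]; rewrite /zmap Hi; case: ifP => Hy Hx.
  have d0 : 2 - y != 0 by rewrite gt_eqF //; lra.
  have E := unfrac (esym Hx) d0.
  left; apply: solve; first by rewrite gt_eqF //; nra.
  nra.
have d0 : 2 - y != 0 by rewrite gt_eqF //; lra.
have E := unfrac (esym Hx) d0.
right; apply: solve; first by rewrite gt_eqF //; nra.
nra.
Qed.

Lemma pre3 (i : 'I_6) (x y : R) : val i = 2%N -> 0 <= y <= 2^-1 -> zmap i y = x ->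
  (y = (3 * x - 1) / (1 + 3 * x) /\ 3^-1 <= x) \/ y = (2 - 3 * x) / (4 - 3 * x).
Proof.
move=> Hi /andP[y0 y1]; rewrite /zmap Hi; case: ifP => Hy Hx.
  have d0 : 3 - 3 * y != 0 by rewrite gt_eqF //; lra.
  have E := unfrac (esym Hx) d0.
  left; split; last by rewrite -Hx ler_pdivlMr; lra.
  apply: solve; first by rewrite gt_eqF //; nra.
  nra.
have d0 : 3 - 3 * y != 0 by rewrite gt_eqF //; lra.
have E := unfrac (esym Hx) d0.
right; apply: solve; first by rewrite gt_eqF //; nra.
nra.
Qed.

Lemma pre4 (i : 'I_6) (x y : R) : val i = 3%N -> 0 <= y <= 2^-1 -> zmap i y = x ->
  y = (4 * x - 1) / (1 + 2 * x) /\ 4^-1 <= x.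
Proof.
move=> Hi /andP[y0 y1]; rewrite /zmap Hi => Hx.
have d0 : 4 - 2 * y != 0 by rewrite gt_eqF //; lra.
have E := unfrac (esym Hx) d0.
split; last by rewrite -Hx ler_pdivlMr; lra.
apply: solve; first by rewrite gt_eqF //; nra.
nra.
Qed.

Lemma pre5 (i : 'I_6) (x y : R) : val i = 4%N -> 0 <= y <= 2^-1 -> zmap i y = x ->
  y = (1 - 4 * x) / (2 - 2 * x) /\ x <= 4^-1.
Proof.
move=> Hi /andP[y0 y1]; rewrite /zmap Hi => Hx.
have d0 : 4 - 2 * y != 0 by rewrite gt_eqF //; lra.
have E := unfrac (esym Hx) d0.
split; last by rewrite -Hx ler_pdivrMr; lra.
apply: solve; first by rewrite gt_eqF //; nra.
nra.
Qed.

Lemma pre6 (i : 'I_6) (x y : R) : val i = 5%N -> 0 <= y <= 2^-1 -> zmap i y = x ->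
  y = (1 - 3 * x) / 2 /\ x <= 3^-1.
Proof.
move=> Hi /andP[y0 y1]; rewrite /zmap Hi => Hx.
have E := unfrac (esym Hx) (_ : 3 != 0).
split; last by lra.
apply: solve => //; lra.
Qed.


Definition TT (i : 'I_6) (x : R) : R := fine (mu (@I0 R `&` zmap i @^-1` [set x])).

Lemma I0P (y : R) : @I0 R y -> 0 <= y <= 2^-1.
Proof. by rewrite /I0 /= in_itv. Qed.

Lemma cont (i : 'I_6) (x : R) : exists p q, @I0 R `&` zmap i @^-1` [set x] `<=` [set p] `|` [set q].
Proof.
case: i => [[|[|[|[|[|[|k]]]]]] Hk] //.
- exists (2 * x / (3 - 2 * x)), 0 => y [/I0P Iy /= Hy]; left; exact: (@pre1 (Ordinal Hk)).
- exists (2 * x / (3 + x)), ((2 - 2 * x) / (4 - x)) => y [/I0P Iy /= Hy]; exact: (@pre2 (Ordinal Hk)).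
- exists ((3 * x - 1) / (1 + 3 * x)), ((2 - 3 * x) / (4 - 3 * x)) => y [/I0P Iy /= Hy].
  by case: (@pre3 (Ordinal Hk) x y) => // [[-> _]|->]; [left|right].
- exists ((4 * x - 1) / (1 + 2 * x)), 0 => y [/I0P Iy /= Hy]; left; exact: (proj1 (@pre4 (Ordinal Hk) x y erefl Iy Hy)).
- exists ((1 - 4 * x) / (2 - 2 * x)), 0 => y [/I0P Iy /= Hy]; left; exact: (proj1 (@pre5 (Ordinal Hk) x y erefl Iy Hy)).
- exists ((1 - 3 * x) / 2), 0 => y [/I0P Iy /= Hy]; left; exact: (proj1 (@pre6 (Ordinal Hk) x y erefl Iy Hy)).
Qed.

Lemma mpre (i : 'I_6) (x : R) : measurable (@I0 R `&` zmap i @^-1` [set x]).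
Proof. by have [p [q H]] := cont i x; exact: sub2_meas H. Qed.

Lemma inv_real (H : M_invariant mu) (x : R) : aa x = \sum_(i < 6) 6^-1 * TT i x.
Proof.
case: H => _ /(_ [set x] (measurable_set1 x)).
under eq_bigr do rewrite (finmu (mpre _ _)) -EFinM.
by rewrite sumEFin aaE => -[].
Qed.

Lemma Tb1 i x : val i = 0%N -> TT i x <= aa (2 * x / (3 - 2 * x)).
Proof. move=> Hi; apply: bound1 => y [/I0P Iy /= Hy]; exact: pre1 Hi Iy Hy. Qed.

Lemma Tb2 i x : val i = 1%N -> TT i x <= aa (2 * x / (3 + x)) + aa ((2 - 2 * x) / (4 - x)).
Proof. move=> Hi; apply: bound2 => y [/I0P Iy /= Hy]; exact: pre2 Hi Iy Hy. Qed.

Lemma Tb2e i x : val i = 1%N -> 2 * x / (3 + x) = (2 - 2 * x) / (4 - x) ->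
  TT i x <= aa (2 * x / (3 + x)).
Proof.
move=> Hi He; apply: bound1 => y [/I0P Iy /= Hy].
by case: (pre2 Hi Iy Hy) => ->.
Qed.

Lemma Tb3 i x : val i = 2%N -> TT i x <= aa ((3 * x - 1) / (1 + 3 * x)) + aa ((2 - 3 * x) / (4 - 3 * x)).
Proof.
move=> Hi; apply: bound2 => y [/I0P Iy /= Hy].
by case: (pre3 Hi Iy Hy) => [[-> _]|->]; [left|right].
Qed.

Lemma Tb3l i x : val i = 2%N -> x < 3^-1 -> TT i x <= aa ((2 - 3 * x) / (4 - 3 * x)).
Proof.
move=> Hi Hx; apply: bound1 => y [/I0P Iy /= Hy].
case: (pre3 Hi Iy Hy) => [[_ H3]|->] //; lra.
Qed.

Lemma Tb3e i x : val i = 2%N -> (3 * x - 1) / (1 + 3 * x) = (2 - 3 * x) / (4 - 3 * x) ->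
  TT i x <= aa ((3 * x - 1) / (1 + 3 * x)).
Proof.
move=> Hi He; apply: bound1 => y [/I0P Iy /= Hy].
by case: (pre3 Hi Iy Hy) => [[-> _]|->].
Qed.

Lemma Tb4 i x : val i = 3%N -> TT i x <= aa ((4 * x - 1) / (1 + 2 * x)).
Proof. move=> Hi; apply: bound1 => y [/I0P Iy /= Hy]; exact: (proj1 (pre4 Hi Iy Hy)). Qed.

Lemma Tb4l i x : val i = 3%N -> x < 4^-1 -> TT i x = 0.
Proof. move=> Hi Hx; apply: bound0 => y [/I0P Iy /= Hy]; have := proj2 (pre4 Hi Iy Hy); lra. Qed.

Lemma Tb5 i x : val i = 4%N -> TT i x <= aa ((1 - 4 * x) / (2 - 2 * x)).
Proof. move=> Hi; apply: bound1 => y [/I0P Iy /= Hy]; exact: (proj1 (pre5 Hi Iy Hy)). Qed.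

Lemma Tb5g i x : val i = 4%N -> 4^-1 < x -> TT i x = 0.
Proof. move=> Hi Hx; apply: bound0 => y [/I0P Iy /= Hy]; have := proj2 (pre5 Hi Iy Hy); lra. Qed.

Lemma Tb6 i x : val i = 5%N -> TT i x <= aa ((1 - 3 * x) / 2).
Proof. move=> Hi; apply: bound1 => y [/I0P Iy /= Hy]; exact: (proj1 (pre6 Hi Iy Hy)). Qed.

Lemma Tb6g i x : val i = 5%N -> 3^-1 < x -> TT i x = 0.
Proof. move=> Hi Hx; apply: bound0 => y [/I0P Iy /= Hy]; have := proj2 (pre6 Hi Iy Hy); lra. Qed.

Lemma TT_ge0 i x : 0 <= TT i x.
Proof. by rewrite /TT fine_ge0 // measure_ge0. Qed.

Lemma inv6 (H : M_invariant mu) (x : R) :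
  6 * aa x = TT ord0 x + TT (lift ord0 ord0) x + TT (lift ord0 (lift ord0 ord0)) x
   + TT (lift ord0 (lift ord0 (lift ord0 ord0))) x
   + TT (lift ord0 (lift ord0 (lift ord0 (lift ord0 ord0)))) x
   + TT (lift ord0 (lift ord0 (lift ord0 (lift ord0 (lift ord0 ord0))))) x.
Proof.
rewrite (inv_real H) !big_ord_recl big_ord0 /=.
set t0 := TT _ _. set t1 := TT _ _. set t2 := TT _ _. set t3 := TT _ _. set t4 := TT _ _. set t5 := TT _ _.
by field.
Qed.

Local Notation o0 := (ord0 : 'I_6).
Local Notation o1 := (lift ord0 ord0 : 'I_6).
Local Notation o2 := (lift ord0 (lift ord0 ord0) : 'I_6).
Local Notation o3 := (lift ord0 (lift ord0 (lift ord0 ord0)) : 'I_6).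
Local Notation o4 := (lift ord0 (lift ord0 (lift ord0 (lift ord0 ord0))) : 'I_6).
Local Notation o5 := (lift ord0 (lift ord0 (lift ord0 (lift ord0 (lift ord0 ord0)))) : 'I_6).
Lemma leaa (t p q : R) : t <= aa p -> p = q -> t <= aa q.
Proof. by move=> h <-. Qed.

Lemma A12 (H : M_invariant mu) : 4 * aa 2^-1 <= aa (2/7) + aa (5^-1).
Proof.
have := inv6 H 2^-1.
have b0 : TT o0 2^-1 <= aa 2^-1 by apply: (leaa (Tb1 (i:=o0) 2^-1 erefl)); field.
have b1 : TT o1 2^-1 <= aa (2/7).
  by apply: (leaa (Tb2e (i:=o1) (x:=2^-1) erefl _)); field.
have b2 : TT o2 2^-1 <= aa (5^-1).
  by apply: (leaa (Tb3e (i:=o2) (x:=2^-1) erefl _)); field.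
have b3 : TT o3 2^-1 <= aa 2^-1.
  by apply: (leaa (Tb4 (i:=o3) 2^-1 erefl)); field.
have b4 : TT o4 2^-1 = 0 by apply: (Tb5g (i:=o4)) => //; lra.
have b5 : TT o5 2^-1 = 0 by apply: (Tb6g (i:=o5)) => //; lra.
rewrite b4 b5; lra.
Qed.

Lemma leaa2 (t p q p' q' : R) : t <= aa p + aa q -> p = p' -> q = q' -> t <= aa p' + aa q'.
Proof. by move=> h <- <-. Qed.

Lemma A0 (H : M_invariant mu) : aa 0 <= aa 2^-1.
Proof.
have := inv6 H 0.
have b0 : TT o0 0 <= aa 0 by apply: (leaa (Tb1 (i:=o0) 0 erefl)); field.
have b1 : TT o1 0 <= aa 0 + aa 2^-1.
  by apply: (leaa2 (Tb2 (i:=o1) 0 erefl)); field.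
have b2 : TT o2 0 <= aa 2^-1.
  by apply: (leaa (Tb3l (i:=o2) (x:=0) erefl _)); [lra| field].
have b3 : TT o3 0 = 0 by apply: (Tb4l (i:=o3)) => //; lra.
have b4 : TT o4 0 <= aa 2^-1.
  by apply: (leaa (Tb5 (i:=o4) 0 erefl)); field.
have b5 : TT o5 0 <= aa 2^-1.
  by apply: (leaa (Tb6 (i:=o5) 0 erefl)); field.
rewrite b3; lra.
Qed.

Lemma y1lt (x : R) : 0 < x < 2^-1 -> 2 * x / (3 - 2 * x) < x.
Proof. move=> /andP[h1 h2]; rewrite ltr_pdivrMr; [nra | lra]. Qed.

Lemma contra (H : M_invariant mu) (m x0 : R) : 0 < m -> 0 <= x0 <= 2^-1 -> aa x0 = m ->
  (forall y, aa y <= m) -> (forall y, y < x0 -> aa y < m) -> False.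
Proof.
move=> m0 /andP[x00 x01] ax0 Hle Hlt.
have a12 := A12 H; have a0 := A0 H.
have h27 := Hle (2/7); have h15 := Hle 5^-1.
have [x0z|xn0] := eqVneq x0 0.
  rewrite x0z in ax0.
  have := inv6 H 0.
  have b0 : TT o0 0 <= aa 0 by apply: (leaa (Tb1 (i:=o0) 0 erefl)); field.
  have b1 : TT o1 0 <= aa 0 + aa 2^-1.
    by apply: (leaa2 (Tb2 (i:=o1) 0 erefl)); field.
  have b2 : TT o2 0 <= aa 2^-1.
    by apply: (leaa (Tb3l (i:=o2) (x:=0) erefl _)); [lra| field].
  have b3 : TT o3 0 = 0 by apply: (Tb4l (i:=o3)) => //; lra.
  have b4 : TT o4 0 <= aa 2^-1.
    by apply: (leaa (Tb5 (i:=o4) 0 erefl)); field.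
  have b5 : TT o5 0 <= aa 2^-1.
    by apply: (leaa (Tb6 (i:=o5) 0 erefl)); field.
  rewrite b3; lra.
have [x0h|x0nh] := eqVneq x0 2^-1.
  rewrite x0h in ax0; lra.
have x0p : 0 < x0 < 2^-1 by apply/andP; split; rewrite lt_neqAle ?x00 ?x01 ?andbT // eq_sym.
have ha := Hlt _ (y1lt x0p).
have [x0q|x0nq] := eqVneq x0 4^-1.
  rewrite x0q in ax0 Hlt; have := inv6 H 4^-1.
  have b0 : TT o0 4^-1 <= aa 5^-1 by apply: (leaa (Tb1 (i:=o0) 4^-1 erefl)); field.
  have b1 : TT o1 4^-1 <= aa (2/13) + aa (2/5).
    by apply: (leaa2 (Tb2 (i:=o1) 4^-1 erefl)); field.
  have b2 : TT o2 4^-1 <= aa (5/13).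
    by apply: (leaa (Tb3l (i:=o2) (x:=4^-1) erefl _)); [lra| field].
  have b3 : TT o3 4^-1 <= aa 0 by apply: (leaa (Tb4 (i:=o3) 4^-1 erefl)); field.
  have b4 : TT o4 4^-1 <= aa 0 by apply: (leaa (Tb5 (i:=o4) 4^-1 erefl)); field.
  have b5 : TT o5 4^-1 <= aa 8^-1 by apply: (leaa (Tb6 (i:=o5) 4^-1 erefl)); field.
  have c1 : aa 5^-1 < m by apply: Hlt; lra.
  have c2 : aa (2/13) < m by apply: Hlt; lra.
  have c3 : aa 8^-1 < m by apply: Hlt; lra.
  have := Hle (2/5); have := Hle (5/13).
  lra.
have [x0t|x0nt] := eqVneq x0 3^-1.
  rewrite x0t in ax0 Hlt; have := inv6 H 3^-1.
  have b0 : TT o0 3^-1 <= aa (2/7) by apply: (leaa (Tb1 (i:=o0) 3^-1 erefl)); field.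
  have b1 : TT o1 3^-1 <= aa 5^-1 + aa (4/11).
    by apply: (leaa2 (Tb2 (i:=o1) 3^-1 erefl)); field.
  have b2 : TT o2 3^-1 <= aa 0 + aa 3^-1.
    by apply: (leaa2 (Tb3 (i:=o2) 3^-1 erefl)); field.
  have b3 : TT o3 3^-1 <= aa 5^-1 by apply: (leaa (Tb4 (i:=o3) 3^-1 erefl)); field.
  have b4 : TT o4 3^-1 = 0 by apply: (Tb5g (i:=o4)) => //; lra.
  have b5 : TT o5 3^-1 <= aa 0 by apply: (leaa (Tb6 (i:=o5) 3^-1 erefl)); field.
  have c1 : aa 5^-1 < m by apply: Hlt; lra.
  have c2 : aa (2/7) < m by apply: Hlt; lra.
  have := Hle (4/11).
  lra.
have := inv6 H x0.
have b0 := Tb1 (i:=o0) x0 erefl.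
have b1 := Tb2 (i:=o1) x0 erefl.
have b3 := Tb4 (i:=o3) x0 erefl.
have b4 := Tb5 (i:=o4) x0 erefl.
have b5 := Tb6 (i:=o5) x0 erefl.
have := Hle (2 * x0 / (3 + x0)); have := Hle ((2 - 2 * x0) / (4 - x0)).
have := Hle ((3 * x0 - 1) / (1 + 3 * x0)); have := Hle ((2 - 3 * x0) / (4 - 3 * x0)).
have := Hle ((4 * x0 - 1) / (1 + 2 * x0)); have := Hle ((1 - 4 * x0) / (2 - 2 * x0)).
have := Hle ((1 - 3 * x0) / 2).
case/andP: x0p => xp1 xp2.
have [xl4|xg4] := ltP x0 4^-1.
  have b2 : TT o2 x0 <= aa ((2 - 3 * x0) / (4 - 3 * x0)) by apply: (Tb3l (i:=o2)) => //; lra.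
  have b3' : TT o3 x0 = 0 by apply: (Tb4l (i:=o3)) => //; lra.
  lra.
have xg4' : 4^-1 < x0 by rewrite lt_neqAle eq_sym x0nq xg4.
have b4' : TT o4 x0 = 0 by apply: (Tb5g (i:=o4)) => //; lra.
have [xl3|xg3] := ltP x0 3^-1.
  have b2 : TT o2 x0 <= aa ((2 - 3 * x0) / (4 - 3 * x0)) by apply: (Tb3l (i:=o2)) => //; lra.
  lra.
have xg3' : 3^-1 < x0 by rewrite lt_neqAle eq_sym x0nt xg3.
have b5' : TT o5 x0 = 0 by apply: (Tb6g (i:=o5)) => //; lra.
have b2 := Tb3 (i:=o2) x0 erefl.
lra.
Qed.

Lemma seq_mu (s : seq R) : uniq s ->
  measurable [set y | y \in s] /\ mu [set y | y \in s] = (\sum_(y <- s) aa y)%:E.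
Proof.
elim: s => [_|y s IH /= /andP[ys us]].
  have -> : [set y : R | y \in [::]] = set0 by apply/seteqP; split => z //=; rewrite in_nil.
  by rewrite big_nil measure0; split.
have [ms es] := IH us.
have -> : [set z : R | z \in y :: s] = [set y] `|` [set z | z \in s].
  apply/seteqP; split => z /=; rewrite /setU /=.
    by rewrite in_cons => /orP [/eqP ->|zs]; [left | right].
  by case => [->|zs]; rewrite in_cons ?eqxx // zs orbT.
split; first by apply: measurableU => //; exact: measurable_set1.
rewrite measureU //; first by rewrite big_cons EFinD -es -(aaE y).
apply/seteqP; split => z // [/= -> ] /= ys'.
by rewrite ys' in ys.
Qed.
Lemma sum_le1 (s : seq R) : uniq s -> \sum_(y <- s) aa y <= 1.
Proof. move=> us; have [ms es] := seq_mu us; rewrite -lee_fin -es; exact: probability_le1. Qed.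

Lemma size_le (c : R) (s : seq R) : all (fun y => c <= aa y) s ->
  (size s)%:R * c <= \sum_(y <- s) aa y.
Proof.
elim: s => [|y s IH] /=; first by rewrite big_nil mul0r.
move/andP=> [h1 h2]; rewrite big_cons -add1n natrD mulrDl mul1r; apply: lerD => //; exact: IH.
Qed.

Lemma cover (c : R) : 0 < c ->
  exists s : seq R, all (fun y => c <= aa y) s /\ forall y, c <= aa y -> y \in s.
Proof.
move=> c0; case: (pselect (exists s : seq R, all (fun y => c <= aa y) s /\ forall y, c <= aa y -> y \in s)) => // Hn.
exfalso.
have step : forall n : nat, exists s : seq R, [/\ uniq s, all (fun y => c <= aa y) s & size s = n].
  elim => [|n [s [us gs ss]]]; first by exists [::].
  have : ~ (forall y, c <= aa y -> y \in s) by move=> Hc; apply: Hn; exists s.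
  move=> /existsNP [y /not_implyP [hy ns]].
  exists (y :: s); split => /=; last by rewrite ss.
    by rewrite us andbT; apply/negP.
  by rewrite hy gs.
have hc : 0 <= c^-1 by rewrite invr_ge0 ltW.
have hN := archi_boundP hc.
have [s [us gs ss]] := step (Num.Def.archi_bound c^-1).
have h1 := size_le gs; have h2 := sum_le1 us.
rewrite ss in h1.
have : 1 < (Num.Def.archi_bound c^-1)%:R * c by rewrite -ltr_pdivrMr // div1r.
lra.
Qed.

Lemma extr (s : seq R) : s != [::] -> exists2 y, y \in s &
  forall z, z \in s -> aa z <= aa y /\ (aa z = aa y -> y <= z).
Proof.
elim: s => [//|a s IH] _.
have [->|sne] := eqVneq s [::].
  exists a; first by rewrite mem_seq1.
  by move=> z; rewrite mem_seq1 => /eqP ->; split => // _.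
have [y ys Hy] := IH sne.
have [h|h|h] := ltgtP (aa y) (aa a).
- exists a; first by rewrite in_cons eqxx.
  move=> z; rewrite in_cons => /orP [/eqP ->|zs]; first by split => // _.
  have [h1 h2] := Hy z zs; split; first by lra.
  move=> e; lra.
- exists y; first by rewrite in_cons ys orbT.
  move=> z; rewrite in_cons => /orP [/eqP ->|zs]; last exact: Hy.
  split; first by lra.
  move=> e; lra.
- have [ay|ya] := leP a y.
    exists a; first by rewrite in_cons eqxx.
    move=> z; rewrite in_cons => /orP [/eqP ->|zs]; first by split => // _.
    have [h1 h2] := Hy z zs; split; first by lra.
    move=> e; have := h2 (etrans e (esym h)); lra.
  exists y; first by rewrite in_cons ys orbT.
  move=> z; rewrite in_cons => /orP [/eqP ->|zs]; last exact: Hy.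
  split; first by lra.
  move=> _; lra.
Qed.

Lemma inI0 (H : M_invariant mu) (y : R) : 0 < aa y -> 0 <= y <= 2^-1.
Proof.
move=> ay; case: (pselect (@I0 R y)) => [/I0P //|ny].
exfalso.
have mI : measurable (@I0 R) by exact: measurable_itv.
have : (mu [set y] <= mu (~` (@I0 R)))%E.
  apply: le_measure; rewrite ?inE; [exact: measurable_set1 | exact: measurableC | by move=> z ->].
rewrite probability_setC // (proj1 H) subee // aaE lee_fin; lra.
Qed.

End S.

Theorem lemma16 (R : realType) (mu : probability R R) :
  M_invariant mu -> forall x : R, mu [set x] = 0%E.
Proof.
move=> H x.
have a0 := aa_ge0 mu x.
rewrite (aaE mu x); suff -> : aa mu x = 0 by [].
apply/eqP; rewrite eq_le a0 andbT leNgt; apply/negP => cpos.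
have [s [gs cov]] := cover mu cpos.
have xs := cov x (le_refl _).
have sne : s != [::] by apply/eqP => se; rewrite se in xs.
have [y0 ys Hy] := extr mu sne.
have cm : aa mu x <= aa mu y0 := (Hy x xs).1.
have Hle : forall z, aa mu z <= aa mu y0.
  move=> z; have [hz|hz] := leP (aa mu x) (aa mu z); first exact: (Hy z (cov z hz)).1.
  exact: le_trans (ltW hz) cm.
have Hlt : forall z, z < y0 -> aa mu z < aa mu y0.
  move=> z hz; rewrite lt_neqAle Hle andbT; apply/eqP => e.
  have zs : z \in s by apply: cov; rewrite e.
  have := (Hy z zs).2 e; rewrite leNgt hz.
  done.
have m0 : 0 < aa mu y0 by exact: lt_le_trans cpos cm.
exact: (contra H m0 (inI0 H m0) erefl Hle Hlt).
Qed.
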